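(* The forcing $\mathbb{T}$ is not c.c.c.: letting $E\subseteq\omega$ be the even numbers and $O=\omega\setminus E$, and for each $a\subseteq O$ letting $p_a:=\{t\in 3^{<\omega}: \forall n\in O\cap|t|\,((n\in a\rightarrow t(n)=1)\wedge(n\notin a\rightarrow t(n)=0))\}$, the family $\{p_a: a\subseteq O\}$ consists of conditions of $\mathbb{T}$ and is an antichain of size $2^{\aleph_0}$.
   Context: $\mathbb{T}$ is the tree-forcing (ordered by inclusion) consisting of perfect trees $p\subseteq 3^{<\omega}$ together with a set $A_p\subseteq\omega$ (the splitting levels of $p$) such that: for every $t\in p$, $|t|\in A_p$ iff $t$ is a splitting node of $p$; every splitting node $t$ is fully splitting (i.e. $t^\frown i\in p$ for every $i\in 3$); for every $s\supseteq \mathrm{stem}(p)$ which is not splitting, $s^\frown 2\notin p$; and for all non-splitting $s,t\in p$ with $|s|=|t|$ and all $i\in 2$, $s^\frown i\in p\Leftrightarrow t^\frown i\in p$. Here $s^\frown i$ denotes the sequence $s$ extended by the value $i$, and $\mathrm{stem}(p)$ is the longest node of $p$ comparable with every node of $p$. *)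

(* Defs.v *)
From mathcomp Require Import all_boot.
Set Implicit Arguments. Unset Strict Implicit. Unset Printing Implicit Defensive.

Definition node := seq 'I_3.
Definition tree3 := node -> Prop.

Definition i0 : 'I_3 := @Ordinal 3 0 isT.
Definition i1 : 'I_3 := @Ordinal 3 1 isT.
Definition i2 : 'I_3 := @Ordinal 3 2 isT.

Definition is_tree (p : tree3) : Prop :=
  (exists t, p t) /\ forall s t, p t -> prefix s t -> p s.

Definition splitting (p : tree3) (t : node) : Prop :=
  p t /\ exists i j : 'I_3, i <> j /\ p (rcons t i) /\ p (rcons t j).

Definition perfect (p : tree3) : Prop :=
  is_tree p /\ forall t, p t -> exists s, prefix t s /\ splitting p s.

Definition comparable (s t : node) : Prop := prefix s t \/ prefix t s.

Definition is_stem (p : tree3) (s : node) : Prop :=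
  p s /\ (forall t, p t -> comparable s t) /\
  (forall s', p s' -> (forall t, p t -> comparable s' t) -> size s' <= size s).

Definition T_cond (p : tree3) : Prop :=
  perfect p /\
  exists A : nat -> Prop,
    (forall t, p t -> (A (size t) <-> splitting p t)) /\
    (forall t, splitting p t -> forall i : 'I_3, p (rcons t i)) /\
    (forall st, is_stem p st -> forall s, p s -> prefix st s ->
        ~ splitting p s -> ~ p (rcons s i2)) /\
    (forall s t, p s -> p t -> ~ splitting p s -> ~ splitting p t ->
        size s = size t -> forall i : 'I_3, i != i2 ->
        (p (rcons s i) <-> p (rcons t i))).

Definition subtree (q p : tree3) : Prop := forall t, q t -> p t.

Definition T_incompatible (p q : tree3) : Prop :=
  ~ exists r, T_cond r /\ subtree r p /\ subtree r q.

Definition countable_family (F : tree3 -> Prop) : Prop :=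
  exists f : nat -> tree3, forall p, F p -> exists n, f n = p.

Definition T_not_ccc : Prop :=
  exists F : tree3 -> Prop,
    (forall p, F p -> T_cond p) /\
    (forall p q, F p -> F q -> p <> q -> T_incompatible p q) /\
    ~ countable_family F.

Definition subset_odd (a : nat -> bool) : Prop := forall n, a n -> odd n.

Definition p_of (a : nat -> bool) : tree3 := fun t =>
  forall n, odd n -> n < size t ->
    (a n -> nat_of_ord (nth i0 t n) = 1) /\ (~~ a n -> nat_of_ord (nth i0 t n) = 0).

(* Main.v *)
Require Import Defs.
From Stdlib Require Import ClassicalEpsilon Classical FunctionalExtensionality.
From mathcomp Require Import all_boot.

Definition vb (b : bool) : nat := if b then 1 else 0.

Lemma pofP a t : p_of a t <->
  forall n, odd n -> n < size t -> nat_of_ord (nth i0 t n) = vb (a n).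
Proof.
split => H n on lt; have := H n on lt; rewrite /vb.
- by case: (a n) => [[h _]|[_ h]]; rewrite h.
- by case: (a n) => ->; split.
Qed.

Lemma rconsP a t i : p_of a (rcons t i) <->
  p_of a t /\ (odd (size t) -> nat_of_ord i = vb (a (size t))).
Proof.
rewrite !pofP; split.
- move=> H; split.
  + move=> n on lt; have := H n on; rewrite size_rcons nth_rcons lt.
    by apply; apply: leqW.
  + move=> o; have := H _ o; rewrite size_rcons nth_rcons ltnn eqxx; apply; exact: ltnSn.
- move=> [Ht Hi] n on; rewrite size_rcons ltnS leq_eqVlt => /orP [/eqP E|lt].
  + by rewrite E nth_rcons ltnn eqxx; apply: Hi; rewrite -E.
  + by rewrite nth_rcons lt; apply: Ht.
Qed.

Lemma splitP a t : splitting (p_of a) t <-> p_of a t /\ ~~ odd (size t).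
Proof.
split.
- move=> [Ht [i [j [ne [Hi Hj]]]]]; split => //.
  apply/negP => o; move/rconsP: Hi => [_ Hi]; move/rconsP: Hj => [_ Hj].
  apply: ne; apply: val_inj => /=; by rewrite Hi // Hj.
- move=> [Ht e]; split => //; exists i0, i1; split => //.
  by split; apply/rconsP; split => //; rewrite (negbTE e).
Qed.

Lemma prefix_closed a s t : p_of a t -> prefix s t -> p_of a s.
Proof.
move=> /pofP Ht /prefixP [s2 E]; subst t; apply/pofP => n on lt.
have := Ht n on; rewrite size_cat nth_cat lt; apply.
by apply: leq_trans lt (leq_addr _ _).
Qed.

Lemma pof_T a : T_cond (p_of a).
Proof.
split.
- split; first split.
  + by exists [::] => n _ lt.
  + by move=> s t Ht Hp; apply: prefix_closed Ht Hp.
  + move=> t Ht; case e: (odd (size t)).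
    * exists (rcons t (if a (size t) then i1 else i0)); split; first exact: prefix_rcons.
      apply/splitP; rewrite size_rcons /= e; split => //.
      by apply/rconsP; split => // _; rewrite /vb; case: (a _).
    * by exists t; split; [exact: prefix_refl | apply/splitP; rewrite e].
- exists (fun n => ~~ odd n); split; [|split; [|split]].
  + move=> t Ht; split; first by move=> e; apply/splitP.
    by move=> /splitP [].
  + move=> t /splitP [Ht e] i; apply/rconsP; split => //; by rewrite (negbTE e).
  + move=> st _ s Hs _ ns /rconsP [_ H].
    case e: (odd (size s)); last by apply: ns; apply/splitP; rewrite e.
    by have := H e; rewrite /vb; case: (a _).
  + move=> s t Hs Ht ns nt e i _.
    have os : odd (size s) by apply/negPn/negP => E; apply: ns; apply/splitP.
    have ot : odd (size t) by rewrite -e.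
    split => /rconsP [_ H]; apply/rconsP; split => // _.
    * by rewrite -e; apply: H.
    * by rewrite e; apply: H.
Qed.

Lemma long r : T_cond r -> forall m, exists t, r t /\ m <= size t.
Proof.
move=> [[[[t0 H0] _] Hp] _]; elim=> [|m [t [Ht lt]]]; first by exists t0.
have [s [ps [Hs [i [j [_ [Hi _]]]]]]] := Hp t Ht.
exists (rcons s i); split => //; rewrite size_rcons ltnS.
exact: leq_trans lt (size_prefix ps).
Qed.

Definition wa (a : nat -> bool) m : node := mkseq (fun k => if a k then i1 else i0) m.

Lemma wa_in a m : p_of a (wa a m).
Proof.
apply/pofP => n _; rewrite size_mkseq => lt; rewrite nth_mkseq //.
by rewrite /vb; case: (a n).
Qed.

Lemma inj a b : subset_odd a -> subset_odd b -> p_of a = p_of b -> a = b.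
Proof.
move=> Ha Hb E; apply: functional_extensionality_dep => n.
case on: (odd n); last first.
  case an: (a n); first by have := Ha _ an; rewrite on.
  case bn: (b n); first by have := Hb _ bn; rewrite on. done.
have := wa_in a n.+1; rewrite E => /pofP H.
have := H n on; rewrite size_mkseq ltnSn nth_mkseq // => /(_ isT).
by rewrite /vb; case: (a n); case: (b n).
Qed.

Lemma incomp a b : subset_odd a -> subset_odd b -> a <> b ->
  T_incompatible (p_of a) (p_of b).
Proof.
move=> Ha Hb ne [r [Hr [ra rb]]].
have [n nab] : exists n, a n <> b n.
  apply: NNPP => H; apply: ne; apply: functional_extensionality_dep => n.
  by apply: NNPP => H2; apply: H; exists n.
have on : odd n.
  by move: nab; case an: (a n); case bn: (b n) => // _; [apply: Ha|apply: Hb].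
have [t [Ht lt]] := @long r Hr n.+1.
move/pofP: (ra _ Ht) => /(_ n on lt) A; move/pofP: (rb _ Ht) => /(_ n on lt) B.
by move: nab A B; rewrite /vb; case: (a n); case: (b n) => // _ ->.
Qed.

Theorem mainTheorem1 :
  T_not_ccc /\
  (forall a, subset_odd a -> T_cond (p_of a)) /\
  (forall a b, subset_odd a -> subset_odd b -> a <> b ->
     T_incompatible (p_of a) (p_of b)) /\
  (forall a b, subset_odd a -> subset_odd b -> p_of a = p_of b -> a = b).
Proof.
split; last by split; [move=> a _; exact: pof_T | split; [exact: incomp | exact: inj]].
exists (fun p => exists a, subset_odd a /\ p = p_of a); split; [|split].
- by move=> p [a [_ ->]]; apply: pof_T.
- move=> p q [a [Ha ->]] [b [Hb ->]] ne; apply: incomp => // E; apply: ne; by rewrite E.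
- move=> [f Hf].
  pose P n := exists b, subset_odd b /\ f n./2 = p_of b /\ b n = false.
  pose a n := odd n && (if excluded_middle_informative (P n) then true else false).
  have Ha : subset_odd a by move=> n /andP [].
  have [k Hk] := Hf (p_of a) (ex_intro _ a (conj Ha erefl)).
  have on : odd k.*2.+1 by rewrite /= odd_double.
  have hk : (k.*2.+1)./2 = k by rewrite /= uphalf_double.
  case e: (a k.*2.+1).
  + have e' := e; move: e'; rewrite /a on /=; case: excluded_middle_informative => // [[b [Hb [E bf]]]] _.
    rewrite hk Hk in E; have ab := @inj a b Ha Hb E; by rewrite ab bf in e.
  + have e' := e; move: e'; rewrite /a on /=; case: excluded_middle_informative => // np _.
    apply: np; exists a; split => //; split; first by rewrite hk.
    exact: e.
Qed.
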